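(* Let $L$ be a finite dimensional simple Lie algebra over $\mathbb{C}$ with Cartan subalgebra $\eta$, root system $\Phi$ and root space decomposition $L=\eta\oplus\bigoplus_{\alpha\in\Phi}L_\alpha$. Let $f:L\times L\to L$ be a biderivation of $L$ and let $\phi,\psi:L\to L$ be linear maps such that $f(x,y)=[\phi(x),y]=[x,\psi(y)]$ for all $x,y\in L$. Then there is a complex number $\lambda$ such that $\phi(x)=\psi(x)=\lambda x$ for all $x\in L_\alpha$ and all $\alpha\in\Phi$.
   Context: A biderivation of a Lie algebra $L$ is a bilinear map $f:L\times L\to L$ such that $f([x,y],z)=[x,f(y,z)]+[f(x,z),y]$ and $f(x,[y,z])=[f(x,y),z]+[y,f(x,z)]$ for all $x,y,z\in L$. Here $L_\alpha=\{x\in L:[h,x]=\alpha(h)x\ \forall h\in\eta\}$. *)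

(* Defs.v *)
From HB Require Import structures.
From mathcomp Require Import all_boot all_order all_algebra.
From mathcomp Require Import reals complex.
Set Implicit Arguments. Unset Strict Implicit. Unset Printing Implicit Defensive.
Import Order.TTheory GRing.Theory Num.Theory.
Local Open Scope ring_scope.

Section LieDefs.
Variables (K : fieldType) (L : vectType K).


Definition lie_bracket (br : L -> L -> L) : Prop :=
  [/\ (forall (a : K) x y z, br (a *: x + y) z = a *: br x z + br y z),
      (forall (a : K) x y z, br z (a *: x + y) = a *: br z x + br z y),
      (forall x, br x x = 0) &
      (forall x y z, br x (br y z) + br y (br z x) + br z (br x y) = 0)].

Definition bilinear_map (f : L -> L -> L) : Prop :=
  (forall (a : K) x y z, f (a *: x + y) z = a *: f x z + f y z) /\
  (forall (a : K) x y z, f z (a *: x + y) = a *: f z x + f z y).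

Definition lie_ideal (br : L -> L -> L) (I : {vspace L}) : Prop :=
  forall x y, y \in I -> br x y \in I.

Definition lie_simple (br : L -> L -> L) : Prop :=
  (exists x y, br x y != 0) /\
  (forall I : {vspace L}, lie_ideal br I -> I = 0%VS \/ I = fullv).

Definition lie_subalgebra (br : L -> L -> L) (H : {vspace L}) : Prop :=
  forall x y, x \in H -> y \in H -> br x y \in H.

Definition ad_semisimple (br : L -> L -> L) (h : L) : Prop :=
  exists s : seq L, <<s>>%VS = fullv /\
    (forall v, v \in s -> exists c : K, br h v = c *: v).

Definition toral (br : L -> L -> L) (H : {vspace L}) : Prop :=
  lie_subalgebra br H /\ (forall h, h \in H -> ad_semisimple br h).

(* Cartan subalgebra of a semisimple Lie algebra: a maximal toral subalgebra *)
Definition cartan_subalgebra (br : L -> L -> L) (H : {vspace L}) : Prop :=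
  toral br H /\ (forall H' : {vspace L}, toral br H' -> (H <= H')%VS -> H' = H).

Definition weight_space (br : L -> L -> L) (H : {vspace L}) (alpha : L -> K)
  (x : L) : Prop :=
  forall h, h \in H -> br h x = alpha h *: x.

Definition is_root (br : L -> L -> L) (H : {vspace L}) (alpha : L -> K) : Prop :=
  (exists h, h \in H /\ alpha h != 0) /\
  (exists x, x != 0 /\ weight_space br H alpha x).

Definition biderivation (br : L -> L -> L) (f : L -> L -> L) : Prop :=
  bilinear_map f /\
  (forall x y z, f (br x y) z = br x (f y z) + br (f x z) y) /\
  (forall x y z, f x (br y z) = br (f x y) z + br y (f x z)).

End LieDefs.

(* Main.v *)
Require Import Defs.
From HB Require Import structures.
From mathcomp Require Import all_boot all_order all_algebra.
From mathcomp Require Import reals complex.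
From Stdlib Require Import Classical_Prop Classical_Pred_Type.
Import Order.TTheory GRing.Theory Num.Theory.
Local Open Scope ring_scope.
Section Abel.
Variable V : zmodType.
Inductive aex : Type := AAt of nat | A0 | AAdd of aex & aex | AOpp of aex.
Fixpoint aeval (env : seq V) (e : aex) : V :=
  match e with
  | AAt n => nth 0 env n
  | A0 => 0
  | AAdd a b => aeval env a + aeval env b
  | AOpp a => - aeval env a
  end.
Fixpoint addl (s t : seq int) : seq int :=
  match s, t with
  | [::], _ => t
  | _, [::] => s
  | x :: s', y :: t' => (x + y) :: addl s' t'
  end.
Fixpoint anorm (e : aex) : seq int :=
  match e with
  | AAt n => rcons (nseq n 0) 1
  | A0 => [::]
  | AAdd a b => addl (anorm a) (anorm b)
  | AOpp a => map (fun x => - x) (anorm a)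
  end.
Fixpoint lsum (env : seq V) (s : seq int) : V :=
  match s with
  | [::] => 0
  | c :: s' => (head 0 env) *~ c + lsum (behead env) s'
  end.
Lemma lsum_addl env s t : lsum env (addl s t) = lsum env s + lsum env t.
Proof.
elim: s t env => [|x s IH] [|y t] env /=; rewrite ?addr0 ?add0r //.
by rewrite IH mulrzDr addrACA.
Qed.
Lemma lsum_opp env s : lsum env (map (fun x => - x) s) = - lsum env s.
Proof.
elim: s env => [|x s IH] env /=; first by rewrite oppr0.
by rewrite IH mulrNz opprD.
Qed.
Lemma lsum_at env n : lsum env (rcons (nseq n 0) 1) = nth 0 env n.
Proof.
elim: n env => [|n IH] [|v env] /=; rewrite ?addr0 ?mulr1z ?mulr0z ?add0r //.
by rewrite IH /= nth_nil.
Qed.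
Lemma aevalE env e : aeval env e = lsum env (anorm e).
Proof.
elim: e => [n||a IHa b IHb|a IHa] /=.
- by rewrite lsum_at.
- by [].
- by rewrite lsum_addl IHa IHb.
- by rewrite lsum_opp IHa.
Qed.
Lemma lsum_zero env s : all (fun x => x == 0) s -> lsum env s = 0.
Proof.
elim: s env => [|x s IH] env //= /andP[/eqP -> H].
by rewrite mulr0z add0r IH.
Qed.
Definition acheck (a b : aex) : bool :=
  all (fun x => x == 0) (addl (anorm a) (map (fun x => - x) (anorm b))).
Lemma acheckP env a b : acheck a b = true -> aeval env a = aeval env b.
Proof.
move=> H; apply/eqP; rewrite -subr_eq0 !aevalE -lsum_opp -lsum_addl.
by apply/eqP/lsum_zero.
Qed.
End Abel.

Ltac ab_inList x l :=
  match l with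
  | nil => constr:(false)
  | cons x _ => constr:(true)
  | cons ?y ?l' =>
    match constr:(tt) with
    | _ => let _ := constr:(@Logic.eq_refl _ x : x = y) in constr:(true)
    | _ => ab_inList x l'
    end
  end.
Ltac ab_add x l :=
  let b := ab_inList x l in
  match b with
  | true => l
  | false => constr:(cons x l)
  end.
Ltac ab_vars l e :=
  match e with
  | (?a + ?b)%R => let l1 := ab_vars l a in ab_vars l1 b
  | (- ?a)%R => ab_vars l a
  | 0%R => l
  | _ => ab_add e l
  end.
Ltac ab_find x l :=
  match l with
  | cons x _ => constr:(O)
  | cons ?y ?l' =>
    match constr:(tt) with
    | _ => let _ := constr:(@Logic.eq_refl _ x : x = y) in constr:(O)
    | _ => let n := ab_find x l' in constr:(S n)
    end
  end.
Ltac ab_reify l e :=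
  match e with
  | (?a + ?b)%R => let r1 := ab_reify l a in let r2 := ab_reify l b in
                   constr:(AAdd r1 r2)
  | (- ?a)%R => let r := ab_reify l a in constr:(AOpp r)
  | 0%R => constr:(A0)
  | _ => let n := ab_find e l in constr:(AAt n)
  end.
Ltac abel :=
  match goal with
  | |- @eq ?T ?x ?y =>
    let l0 := constr:(@nil T) in
    let l1 := ab_vars l0 x in
    let l := ab_vars l1 y in
    let r1 := ab_reify l x in
    let r2 := ab_reify l y in
    change (@aeval _ l r1 = @aeval _ l r2);
    apply: acheckP; vm_compute; reflexivity
  end.
Section Lie.
Variables (F : numClosedFieldType) (L : vectType F) (br : L -> L -> L).
Hypothesis HL : lie_bracket br.
Hypothesis Hs : lie_simple br.
Local Notation "x *b y" := (br x y) (at level 40, left associativity).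

Definition lin (g : L -> L) := forall (a : F) u v, g (a *: u + v) = a *: g u + g v.

Lemma brDZl a x y z : (a *: x + y) *b z = a *: (x *b z) + y *b z.
Proof. by case: HL. Qed.
Lemma brDZr a x y z : z *b (a *: x + y) = a *: (z *b x) + z *b y.
Proof. by case: HL. Qed.
Lemma brxx x : x *b x = 0.
Proof. by case: HL. Qed.
Lemma jacobi0 x y z : x *b (y *b z) + y *b (z *b x) + z *b (x *b y) = 0.
Proof. by case: HL. Qed.

Lemma self_add (v : L) : v = v + v -> v = 0.
Proof. by move=> H; rewrite -[LHS](addrK v v) -{1}H subrr. Qed.
Lemma br0l z : 0 *b z = 0.
Proof.
by apply: self_add; have := brDZl 1 0 0 z; rewrite !scale1r addr0.
Qed.
Lemma br0r z : z *b 0 = 0.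
Proof.
by apply: self_add; have := brDZr 1 0 0 z; rewrite !scale1r addr0.
Qed.
Lemma brDl x y z : (x + y) *b z = x *b z + y *b z.
Proof. by have := brDZl 1 x y z; rewrite !scale1r. Qed.
Lemma brDr x y z : z *b (x + y) = z *b x + z *b y.
Proof. by have := brDZr 1 x y z; rewrite !scale1r. Qed.
Lemma brZl a x z : (a *: x) *b z = a *: (x *b z).
Proof. by rewrite -[a *: x]addr0 brDZl br0l addr0. Qed.
Lemma brZr a x z : z *b (a *: x) = a *: (z *b x).
Proof. by rewrite -[a *: x]addr0 brDZr br0r addr0. Qed.
Lemma brNl x z : (- x) *b z = - (x *b z).
Proof. by rewrite -scaleN1r brZl scaleN1r. Qed.
Lemma brNr x z : z *b (- x) = - (z *b x).
Proof. by rewrite -scaleN1r brZr scaleN1r. Qed.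
Lemma brBl x y z : (x - y) *b z = x *b z - y *b z.
Proof. by rewrite brDl brNl. Qed.
Lemma brBr x y z : z *b (x - y) = z *b x - z *b y.
Proof. by rewrite brDr brNr. Qed.
Lemma brC x y : y *b x = - (x *b y).
Proof.
have := brxx (x + y); rewrite brDl !brDr !brxx add0r addr0 => /eqP.
by rewrite addr_eq0 => /eqP ->; rewrite opprK.
Qed.
Lemma jac x y z : x *b (y *b z) = (x *b y) *b z + y *b (x *b z).
Proof.
have H := jacobi0 x y z.
rewrite (brC x z) brNr (brC (x *b y) z) in H.
apply/eqP; rewrite -subr_eq0; apply/eqP; rewrite -H; abel.
Qed.
Lemma brsuml I (r : seq I) (P : pred I) (g : I -> L) z :
  (\sum_(i <- r | P i) g i) *b z = \sum_(i <- r | P i) (g i *b z).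
Proof.
elim/big_rec2: _ => [|i y1 y2 _ <-]; first by rewrite br0l.
by rewrite brDl.
Qed.
Lemma brsumr I (r : seq I) (P : pred I) (g : I -> L) z :
  z *b (\sum_(i <- r | P i) g i) = \sum_(i <- r | P i) (z *b g i).
Proof.
elim/big_rec2: _ => [|i y1 y2 _ <-]; first by rewrite br0r.
by rewrite brDr.
Qed.

Lemma nonab : exists x y, x *b y != 0.
Proof. by case: Hs. Qed.

Lemma two_neq0 : (2%:R : F) != 0.
Proof. by rewrite pnatr_eq0. Qed.
Lemma three_neq0 : (3%:R : F) != 0.
Proof. by rewrite pnatr_eq0. Qed.
Lemma double0 (v : L) : v + v = 0 -> v = 0.
Proof.
move=> H; have : (2%:R : F) *: v == 0 by rewrite scaler_nat mulr2n H.
by rewrite scaler_eq0 (negbTE two_neq0) => /eqP.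
Qed.
Lemma triple0 (v : L) : v + v + v = 0 -> v = 0.
Proof.
move=> H; have : (3%:R : F) *: v == 0.
  by rewrite scaler_nat !mulrS mulr0n addr0 addrA H.
by rewrite scaler_eq0 (negbTE three_neq0) => /eqP.
Qed.
Lemma ideal_pred (P : L -> Prop) :
  P 0 -> (forall a u v, P u -> P v -> P (a *: u + v)) ->
  (forall x y, P y -> P (x *b y)) ->
  (forall v, P v -> v = 0) \/ (forall v, P v).
Proof.
move=> P0 Plin Pbr.
have build : forall k : nat, exists U : {vspace L},
    (forall u, u \in U -> P u) /\ ((k <= \dim U)%N \/ forall v, P v -> v \in U).
  elim=> [|k [U [HU Hk]]].
    exists 0%VS; split; last by left.
    by move=> u; rewrite memv0 => /eqP ->.
  case: Hk => [Hk|Hall]; last by exists U; split => //; right.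
  case: (classic (forall v, P v -> v \in U)) => [Hall|Hn].
    by exists U; split => //; right.
  have [v Hv'] := not_all_ex_not _ _ Hn.
  have [Pv Hv] := imply_to_and _ _ Hv'.
  exists (U + <[v]>)%VS; split.
    move=> u /memv_addP [u1 Hu1 [u2 /vlineP [t ->] ->]].
    by rewrite addrC; apply: Plin => //; apply: HU.
  left.
  have HS : (U <= U + <[v]>)%VS by apply: addvSl.
  have Hlt : (\dim U < \dim (U + <[v]>))%N.
    rewrite ltnNge; apply/negP => Hd.
    have /eqP E : U == (U + <[v]>)%VS by rewrite eqEdim HS Hd.
    apply: Hv; rewrite E; apply/memv_addP; exists 0; first exact: mem0v.
    by exists v; rewrite ?memv_line ?add0r.
  exact: leq_ltn_trans Hk Hlt.
have [U [HU [Hk|Hall]]] := build (\dim (fullv : {vspace L})).+1.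
  by have := dimvS (subvf U); rewrite leqNgt Hk.
have Hid : lie_ideal br U.
  by move=> x y /HU Py; apply: Hall; apply: Pbr.
case: Hs => _ /(_ U Hid) [HU0|HUf].
  by left => v /Hall; rewrite HU0 memv0 => /eqP.
by right => v; apply: HU; rewrite HUf memvf.
Qed.

Lemma center0 z : (forall y, z *b y = 0) -> z = 0.
Proof.
move=> Hz.
have := @ideal_pred (fun v => forall y, v *b y = 0).
case.
- by move=> y; rewrite br0l.
- by move=> a u v Hu Hv y; rewrite brDZl Hu Hv scaler0 addr0.
- move=> x y Hy w.
  rewrite brC jac (brC y (w *b x)) (brC y w) !Hy.
  by rewrite oppr0 br0r add0r oppr0.
- by move=> H; apply: H.
- move=> H; have [x [y]] := nonab.
  by rewrite H eqxx.
Qed.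
Lemma sum_ind (P : L -> Prop) (I : finType) (c : I -> F) (g : I -> L) :
  P 0 -> (forall a u v, P u -> P v -> P (a *: u + v)) ->
  (forall i, P (g i)) -> P (\sum_i c i *: g i).
Proof.
move=> P0 Plin Pg; elim/big_ind: _ => //.
  by move=> u v Pu Pv; rewrite -[u]scale1r; apply: Plin.
by move=> i _; rewrite -[_ *: _]addr0; apply: Plin.
Qed.

Local Notation e := (vbasis (fullv : {vspace L})).
Local Notation n := (\dim (fullv : {vspace L})).

Lemma span_ind (P : L -> Prop) :
  P 0 -> (forall a u v, P u -> P v -> P (a *: u + v)) ->
  (forall i : 'I_n, P e`_i) -> forall v, P v.
Proof.
move=> P0 Plin Pe v; rewrite (coord_vbasis (memvf v)).
exact: sum_ind.
Qed.

Definition pairs : seq (L * L) := [seq (a, b) | a <- e, b <- e].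
Definition Xt : (size pairs).-tuple L :=
  map_tuple (fun p => p.1 *b p.2) (in_tuple pairs).

Lemma Xt_nth (k : 'I_(size pairs)) :
  Xt`_k = (nth (0, 0) pairs k).1 *b (nth (0, 0) pairs k).2.
Proof. by rewrite /= (nth_map (0, 0)). Qed.

Lemma e_in_pairs (i j : 'I_n) : (e`_i, e`_j) \in pairs.
Proof.
by apply: allpairs_f; apply: mem_nth; rewrite size_tuple.
Qed.

Lemma br_in_Xt x y : x *b y \in <<Xt>>%VS.
Proof.
move: x y; apply: span_ind.
- by move=> y; rewrite br0l mem0v.
- by move=> a u v Hu Hv y; rewrite brDZl memvD ?memvZ.
move=> i; apply: span_ind.
- by rewrite br0r mem0v.
- by move=> a u v Hu Hv; rewrite brDZr memvD ?memvZ.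
move=> j; apply: memv_span; rewrite /Xt /=.
exact: (map_f (fun p : L * L => p.1 *b p.2) (e_in_pairs i j)).
Qed.

Lemma perfect v : v \in <<Xt>>%VS.
Proof.
have := @ideal_pred (fun v => v \in <<Xt>>%VS); case.
- exact: mem0v.
- by move=> a u w Hu Hw; rewrite memvD ?memvZ.
- by move=> x y _; apply: br_in_Xt.
- move=> H; have [x [y]] := nonab.
  by rewrite (H _ (br_in_Xt x y)) eqxx.
- by move=> H; apply: H.
Qed.

Lemma bracket_ind (P : L -> Prop) :
  P 0 -> (forall a u v, P u -> P v -> P (a *: u + v)) ->
  (forall x y, P (x *b y)) -> forall v, P v.
Proof.
move=> P0 Plin Pb v; rewrite (coord_span (perfect v)).
apply: sum_ind => // k; rewrite Xt_nth; exact: Pb.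
Qed.

Lemma center0' z : (forall x y, z *b (x *b y) = 0) -> z = 0.
Proof.
move=> Hz; apply: center0; apply: bracket_ind.
- exact: br0r.
- by move=> a u v Hu Hv; rewrite brDZr Hu Hv scaler0 addr0.
- exact: Hz.
Qed.

Lemma ad2_contra : (forall z w, z *b (z *b w) = 0) -> False.
Proof.
move=> H.
have P1 : forall a b c, a *b (b *b c) = - (b *b (a *b c)).
  move=> a b c; have := H (a + b) c.
  rewrite !brDl !brDr !H add0r addr0 => /eqP; rewrite addr_eq0 => /eqP.
  done.
have P2 : forall a b c, a *b (b *b c) = 0.
  move=> a b c; apply: triple0.
  have J := jac a b c.
  have E1 : (a *b b) *b c = - (a *b (b *b c)).
    by rewrite brC P1 (brC b c) brNr !opprK.
  rewrite E1 (P1 b a c) in J.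
  by rewrite {1}J; abel.
have [x [y]] := nonab.
suff -> : x = 0 by rewrite br0l eqxx.
apply: center0 => w; move: w; apply: bracket_ind.
- exact: br0r.
- by move=> a u v Hu Hv; rewrite brDZr Hu Hv scaler0 addr0.
- by move=> u v; apply: P2.
Qed.

Lemma end_of_lin (g : L -> L) : lin g -> exists h : 'End(L), forall v, h v = g v.
Proof.
move=> Hg.
pose G : {linear L -> L} :=
  HB.pack g (GRing.isLinear.Build F L L *:%R g (fun a u v => Hg a u v)).
by exists (linfun G) => v; rewrite lfunE.
Qed.

Lemma dim_pos : (0 < n)%N.
Proof.
rewrite lt0n dimv_eq0; apply/negP => /eqP H0.
have [x [y]] := nonab.
by have := memvf (x *b y); rewrite H0 memv0 => ->.
Qed.

Lemma eigen (g : L -> L) : lin g -> exists c v, v != 0 /\ g v = c *: v.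
Proof.
move=> /end_of_lin [h Hh].
pose M := passmx.mxof e e h.
have [c /eigenvalueP [u Hu u0]] := eigenvalue_closed M dim_pos.
exists c, (passmx.vecof e u); split.
  by rewrite passmx.vecof_eq0 ?vbasisP.
rewrite -Hh (passmx.hom_vecof e (vbasisP fullv)) -/M Hu.
have := passmx.vecof_linear e c u 0; rewrite addr0 => ->.
have /eqP -> : passmx.vecof e 0 == 0 by rewrite passmx.vecof_eq0 ?vbasisP.
by rewrite addr0.
Qed.
Arguments end_of_lin {g}. Arguments eigen {g}.
Lemma lin_from (P Q T1 T2 : L) : P = Q -> T1 - T2 = P - Q -> T1 = T2.
Proof. by move=> -> /eqP; rewrite subrr subr_eq0 => /eqP. Qed.
Arguments lin_from {P Q T1 T2}.
Lemma lin0 g : lin g -> g 0 = 0.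
Proof. by move=> Hg; apply: self_add; have := Hg 1 0 0; rewrite !scale1r addr0. Qed.
Lemma linD g : lin g -> forall u v, g (u + v) = g u + g v.
Proof. by move=> Hg u v; have := Hg 1 u v; rewrite !scale1r. Qed.
Lemma linZ g : lin g -> forall a u, g (a *: u) = a *: g u.
Proof. by move=> Hg a u; have := Hg a u 0; rewrite !addr0 (@lin0 g Hg) addr0. Qed.
Lemma linN g : lin g -> forall u, g (- u) = - g u.
Proof. by move=> Hg u; rewrite -scaleN1r (@linZ g Hg) scaleN1r. Qed.
Lemma linB g : lin g -> forall u v, g (u - v) = g u - g v.
Proof. by move=> Hg u v; rewrite (@linD g Hg) (@linN g Hg). Qed.
Arguments lin0 {g}. Arguments linD {g}. Arguments linZ {g}.
Arguments linN {g}. Arguments linB {g}.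
Lemma jacl a b c : (a *b b) *b c = a *b (b *b c) + (a *b c) *b b.
Proof. by rewrite jac (brC (a *b c) b); abel. Qed.
Lemma sum_comb (I : finType) (a : F) (c1 c2 : I -> F) (g : I -> L) :
  \sum_i (a * c1 i + c2 i) *: g i =
  a *: \sum_i c1 i *: g i + \sum_i c2 i *: g i.
Proof.
by rewrite scaler_sumr -big_split; apply: eq_bigr => i _; rewrite scalerDl scalerA.
Qed.
Lemma sum_sub (I : finType) (c1 c2 : I -> F) (g : I -> L) :
  \sum_i (c1 i - c2 i) *: g i = \sum_i c1 i *: g i - \sum_i c2 i *: g i.
Proof. by rewrite -sumrB; apply: eq_bigr => i _; rewrite scalerBl. Qed.

Section QPart.
Variable th : L -> L.
Hypothesis Hth : lin th.
Hypothesis HQ : forall x y, th x *b y = x *b th y.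

Definition dl x y := th x *b y.
Lemma dskew x y : dl y x = - dl x y.
Proof. by rewrite /dl HQ brC. Qed.
Lemma D1 a b c : dl (a *b b) c = a *b dl b c + dl a c *b b.
Proof.
rewrite /dl HQ jacl (HQ b c) (HQ a c); abel.
Qed.
Lemma D2 a b c : dl a (b *b c) = dl a b *b c + b *b dl a c.
Proof. by rewrite /dl jac. Qed.

Definition FF x y u v := dl x y *b (u *b v) - (x *b y) *b dl u v.

Lemma FF13 x y u v : FF x y u v = FF u y x v.
Proof.
have E1 := D1 x u (y *b v).
have E2 := D2 (x *b u) y v.
rewrite E2 !D1 !D2 !brDl !brDr in E1.
rewrite (jac x (dl u y) v) (jac x y (dl u v)) (jac y (dl x v) u) in E1.
rewrite (jacl (dl x y) v u) in E1.
rewrite /FF (brC v u) brNr (brC y u) brNl.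
rewrite (brC (dl x v) (y *b u)).
apply: (lin_from E1); abel.
Qed.
Lemma FF12 x y u v : FF y x u v = - FF x y u v.
Proof. by rewrite /FF dskew brNl (brC x y) brNl opprB; abel. Qed.

Lemma bresar x y u v : (th x *b y) *b (u *b v) = (x *b y) *b (th u *b v).
Proof.
have H : FF x y u v = 0.
  apply: double0.
  have E : FF x y u v = - FF x y u v.
    have h1 := FF12 x y u v; have h2 := FF13 y x u v.
    have h3 := FF12 x u y v; have h4 := FF13 x u y v.
    have h5 := FF12 u y x v; have h6 := FF13 u y x v.
    by rewrite -h1 h2 h3 h4 h5 h6 opprK.
  by rewrite {1}E addNr.
by move: H; rewrite /FF /dl => /eqP; rewrite subr_eq0 => /eqP.
Qed.
Definition Yk (k : 'I_(size pairs)) :=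
  th (nth (0, 0) pairs k).1 *b (nth (0, 0) pairs k).2.
Definition gam v := \sum_k coord Xt k v *: Yk k.

Lemma gam_lin : lin gam.
Proof.
move=> a u v; rewrite /gam -sum_comb; apply: eq_bigr => k _.
by rewrite linearP.
Qed.

Lemma wd (c : 'I_(size pairs) -> F) :
  \sum_k c k *: Xt`_k = 0 -> \sum_k c k *: Yk k = 0.
Proof.
move=> H; apply: center0' => u v.
rewrite brsuml.
have -> : \sum_k (c k *: Yk k) *b (u *b v) =
          \sum_k (c k *: Xt`_k) *b (th u *b v).
  apply: eq_bigr => k _; rewrite !brZl Xt_nth /Yk bresar //.
by rewrite -brsuml H br0l.
Qed.

Lemma Phi x y : exists c : 'I_(size pairs) -> F,
  \sum_k c k *: Xt`_k = x *b y /\ \sum_k c k *: Yk k = th x *b y.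
Proof.
move: x y; apply: span_ind.
- move=> y; exists (fun _ => 0); rewrite br0l (lin0 Hth) br0l.
  by split; apply: big1 => k _; rewrite scale0r.
- move=> a u v Hu Hv y.
  have [c1 [H1 H1']] := Hu y; have [c2 [H2 H2']] := Hv y.
  exists (fun k => a * c1 k + c2 k); rewrite !sum_comb H1 H1' H2 H2'.
  by rewrite brDZl Hth brDZl.
move=> i; apply: span_ind.
- exists (fun _ => 0); rewrite br0r br0r.
  by split; apply: big1 => k _; rewrite scale0r.
- move=> a u v [c1 [H1 H1']] [c2 [H2 H2']].
  exists (fun k => a * c1 k + c2 k); rewrite !sum_comb H1 H1' H2 H2'.
  by rewrite !brDZr.
move=> j.
have Hin := e_in_pairs i j.
have Hlt := Hin; rewrite -index_mem in Hlt.
pose k0 : 'I_(size pairs) := Ordinal Hlt.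
have Hk0 := nth_index (0, 0) Hin.
exists (fun k => (k == k0)%:R).
have sum1 : forall g : 'I_(size pairs) -> L,
    \sum_k (k == k0)%:R *: g k = g k0.
  move=> g; rewrite (bigD1 k0) //= eqxx scale1r big1 ?addr0 //.
  by move=> k /negbTE ->; rewrite scale0r.
by rewrite !sum1 Xt_nth /Yk /k0 /= Hk0.
Qed.
Lemma gam_br x y : gam (x *b y) = th x *b y.
Proof.
have [c [H1 H2]] := Phi x y.
have E : x *b y = \sum_k coord Xt k (x *b y) *: Xt`_k := coord_span (perfect _).
have : \sum_k (coord Xt k (x *b y) - c k) *: Xt`_k = 0.
  by rewrite sum_sub -E H1 subrr.
move/wd; rewrite sum_sub H2 => /eqP; rewrite subr_eq0 => /eqP.
by rewrite /gam.
Qed.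

Lemma gamQ a b : gam a *b b = a *b gam b.
Proof.
move: a b; apply: bracket_ind.
- by move=> b; rewrite (lin0 gam_lin) br0l br0l.
- by move=> a u v Hu Hv b; rewrite gam_lin !brDZl Hu Hv.
move=> x y; apply: bracket_ind.
- by rewrite (lin0 gam_lin) !br0r.
- by move=> a u v Hu Hv; rewrite gam_lin !brDZr Hu Hv.
by move=> u v; rewrite !gam_br bresar.
Qed.

Definition tau v := th v - gam v.
Lemma tau_lin : lin tau.
Proof. move=> a u v; rewrite /tau Hth gam_lin scalerBr. abel. Qed.
Lemma tauQ x y : tau x *b y = x *b tau y.
Proof. by rewrite /tau brBl brBr HQ gamQ. Qed.

Lemma claim1 x y z : tau (x *b y) *b z = - (x *b tau (y *b z)).
Proof.
rewrite /tau !gam_br !brBl !brBr.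
rewrite (HQ (x *b y) z) (jacl x y (th z)) -(HQ y z) -(HQ x z).
rewrite (jacl (th x) y z) (HQ x (y *b z)); abel.
Qed.

Lemma key1 x z : (x *b z) *b tau z = 0.
Proof. by rewrite -tauQ claim1 brxx (lin0 tau_lin) br0r oppr0. Qed.

Lemma key2 z : z *b tau z = 0.
Proof.
apply: double0; have := tauQ z z; rewrite brC => /eqP.
by rewrite eq_sym -subr_eq0 opprK => /eqP.
Qed.

Lemma claim2 z w : z *b (z *b tau w) = 0.
Proof.
rewrite -tauQ jac key2 br0l add0r brC (brC w z) brNl key1.
by rewrite oppr0 oppr0.
Qed.

Lemma tau0 v : tau v = 0.
Proof.
have := @ideal_pred (fun v => tau v = 0); case.
- exact: (lin0 tau_lin).
- by move=> a u w Hu Hw; rewrite tau_lin Hu Hw scaler0 addr0.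
- move=> x y Hy; rewrite (brC y x) (linN tau_lin); apply/eqP.
  rewrite oppr_eq0; apply/eqP; apply: center0 => z.
  by rewrite claim1 -tauQ Hy br0l oppr0.
- move=> Hinj; exfalso.
  have [h Hh] := end_of_lin tau_lin.
  have Hk : lker h == 0%VS.
    apply/eqP/vspaceP => w; rewrite memv_ker memv0 Hh.
    by apply/eqP/eqP => [/Hinj|->]; last exact: (lin0 tau_lin).
  have Himg := lker0_limgf Hk.
  apply: ad2_contra => z w.
  have : w \in limg h by rewrite Himg memvf.
  by case/memv_imgP => w' _ ->; rewrite Hh claim2.
- by move=> H; apply: H.
Qed.

Lemma centroid x y : th (x *b y) = th x *b y.
Proof. by have := tau0 (x *b y); rewrite /tau gam_br => /eqP; rewrite subr_eq0 => /eqP. Qed.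

Lemma QS : exists c, forall v, th v = c *: v.
Proof.
have [c [v [v0 Hv]]] := eigen Hth.
exists c.
have := @ideal_pred (fun w => th w = c *: w); case.
- by rewrite (lin0 Hth) scaler0.
- by move=> a u w Hu Hw; rewrite Hth Hu Hw scalerDr !scalerA mulrC.
- by move=> x y Hy; rewrite centroid HQ Hy brZr.
- by move=> H; move: v0; rewrite (H _ Hv) eqxx.
- by [].
Qed.
End QPart.
Definition AQ (g : L -> L) := lin g /\ forall x y, g x *b y = - (x *b g y).

Lemma jordan_Q s1 s2 : AQ s1 -> AQ s2 ->
  exists c, forall v, s1 (s2 v) + s2 (s1 v) = c *: v.
Proof.
move=> [L1 A1] [L2 A2].
apply: (@QS (fun v => s1 (s2 v) + s2 (s1 v))).
  by move=> a u v; rewrite L1 L2 L2 L1 scalerDr; abel.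
move=> x y; rewrite brDl brDr A1 A2 A2 A1 !opprK; abel.
Qed.

Arguments jordan_Q {s1 s2}.
Lemma Dlin s x : AQ s -> AQ (fun y => s (x *b y) - x *b s y).
Proof.
move=> [Ls As]; split.
  move=> a u v; rewrite brDZr !Ls brDZr scalerBr; abel.
move=> y z; rewrite !brBl !brBr.
have E := As (x *b z) y.
rewrite (As (x *b y) z) (jacl x y (s z)) (jacl x (s y) z) (As y z) brNr.
rewrite (brC (s (x *b z)) y) (brC (x *b s z) y).
apply: (lin_from (esym E)); abel.
Qed.

Lemma sq_Q s : AQ s -> exists c, forall v, s (s v) = c *: v.
Proof.
move=> Hs'; have [c Hc] := jordan_Q Hs' Hs'.
exists (c / 2%:R) => v.
have H2 := two_neq0.
apply: (@scalerI _ _ (2%:R : F)) => //.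
by rewrite scalerA mulrC divfK // -Hc scaler_nat mulr2n.
Qed.
Lemma AQ_add s1 s2 : AQ s1 -> AQ s2 -> AQ (fun v => s1 v + s2 v).
Proof.
move=> [L1 A1] [L2 A2]; split.
  by move=> a u v; rewrite L1 L2 scalerDr; abel.
by move=> x y; rewrite brDl brDr A1 A2 opprD.
Qed.
Arguments AQ_add {s1 s2}.

Lemma AQ_lin s : AQ s -> lin s.
Proof. by case. Qed.
Arguments AQ_lin {s}. Arguments Dlin {s}.

Section CaseB.
Hypothesis HB : forall t, AQ t -> forall v, t (t v) = 0.

Lemma anticomm t1 t2 v : AQ t1 -> AQ t2 -> t1 (t2 v) = - t2 (t1 v).
Proof.
move=> H1 H2; have H := HB _ (AQ_add H1 H2) v.
rewrite /= (linD (AQ_lin H1)) (linD (AQ_lin H2)) (HB _ H1) (HB _ H2) in H.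
by apply/eqP; rewrite -addr_eq0; apply/eqP; rewrite -H; abel.
Qed.

Lemma common_ker {W : {vspace L}} : W != 0%VS ->
  (forall t, AQ t -> forall w, w \in W -> t w \in W) ->
  exists2 v, v \in W & v != 0 /\ forall t, AQ t -> t v = 0.
Proof.
move: {2}(\dim W).+1 (ltnSn (\dim W)) => k; elim: k W => // k IH W Hk W0 Wst.
case: (classic (forall t, AQ t -> forall w, w \in W -> t w = 0)) => [Hall|Hn].
  exists (vpick W); first exact: memv_pick.
  by split; [rewrite vpick0 | move=> t Ht; apply: Hall => //; apply: memv_pick].
have [t0 Ht0'] := not_all_ex_not _ _ Hn.
have [Ht0 Ht0''] := imply_to_and _ _ Ht0'.
have [w0 Hw0'] := not_all_ex_not _ _ Ht0''.
have [Hw0 Ht0w0] := imply_to_and _ _ Hw0'.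
have [h Hh] := end_of_lin (AQ_lin Ht0).
pose W' := (h @: W)%VS.
have sub : (W' <= W)%VS.
  apply/subvP => w /memv_imgP [u Hu ->]; rewrite Hh; exact: Wst.
have Hw0W : t0 w0 \in W' by rewrite -Hh memv_img.
have [v Hv [v0 Hvt]] : exists2 v, v \in W' & v != 0 /\ forall t, AQ t -> t v = 0.
  apply: IH.
  - rewrite -ltnS; apply: leq_trans Hk; rewrite ltnS ltnNge.
    apply/negP => Hd.
    have /eqP E : W' == W by rewrite eqEdim sub Hd.
    apply: Ht0w0; move: Hw0; rewrite -E => /memv_imgP [u _ ->].
    by rewrite Hh (HB _ Ht0).
  - by apply/eqP => E; move: Hw0W; rewrite E memv0 => /eqP.
  - move=> t Ht w /memv_imgP [u Hu ->].
    rewrite Hh anticomm // -(linN (AQ_lin Ht0)) -Hh memv_img //.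
    by rewrite memvN; apply: Wst.
by exists v => //; apply: (subvP sub).
Qed.

Lemma AQ0_B s : AQ s -> forall v, s v = 0.
Proof.
move=> Hs0.
have := @ideal_pred (fun v => forall t, AQ t -> t v = 0); case.
- by move=> t Ht; apply: (lin0 (AQ_lin Ht)).
- by move=> a u w Hu Hw t Ht; rewrite (AQ_lin Ht) Hu // Hw // scaler0 addr0.
- move=> x y Hy t Ht.
  have := Hy _ (Dlin x Ht); rewrite (Hy _ Ht) br0r subr0 => ->.
  done.
- move=> H; exfalso.
  have Hf0 : (fullv : {vspace L}) != 0%VS.
    by apply/eqP => E; have := dim_pos; rewrite E dimv0.
  have Hst : forall t, AQ t -> forall w, w \in fullv -> t w \in fullv.
    by move=> t _ w _; apply: memvf.
  have [v _ [v0 Hv]] := common_ker Hf0 Hst.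
  by move: v0; rewrite (H _ Hv) eqxx.
- by move=> H v; apply: H.
Qed.
End CaseB.
Section CaseA.
Variable sg : L -> L.
Hypothesis Hsg : AQ sg.
Hypothesis Hinv : forall v, sg (sg v) = v.

Let Ls := AQ_lin Hsg.
Let As := Hsg.2.
Definition Aa a := sg a = a.
Definition Bb b := sg b = - b.
Definition Sp w := w + sg w.
Definition Sm w := w - sg w.

Lemma ASp w : Aa (Sp w).
Proof. by rewrite /Aa /Sp (linD Ls) Hinv addrC. Qed.
Lemma BSm w : Bb (Sm w).
Proof. by rewrite /Bb /Sm (linB Ls) Hinv opprB. Qed.
Lemma Sp_lin : lin Sp.
Proof. by move=> a u v; rewrite /Sp Ls scalerDr; abel. Qed.
Lemma Sm_lin : lin Sm.
Proof. by move=> a u v; rewrite /Sm Ls scalerBr; abel. Qed.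
Lemma F1 a a' : Aa a -> Aa a' -> a *b a' = 0.
Proof. by move=> Ha Ha'; apply: double0; have := As a a'; rewrite Ha Ha' => E; rewrite {1}E addNr. Qed.
Lemma F2 b b' : Bb b -> Bb b' -> b *b b' = 0.
Proof.
move=> Hb Hb'; apply: double0; have := As b b'; rewrite Hb Hb' brNl brNr opprK.
by move=> E; rewrite -{1}E addNr.
Qed.
Arguments F1 {a a'}. Arguments F2 {b b'}.
Lemma quad x y : (x *b y + x *b y) + (x *b y + x *b y) = Sp x *b Sm y + Sm x *b Sp y.
Proof.
have Dx : x + x = Sp x + Sm x by rewrite /Sp /Sm; abel.
have Dy : y + y = Sp y + Sm y by rewrite /Sp /Sm; abel.
have : (x + x) *b (y + y) = (Sp x + Sm x) *b (Sp y + Sm y) by rewrite Dx Dy.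
move: (ASp x) (BSm x) (ASp y) (BSm y).
move: (Sp x) (Sm x) (Sp y) (Sm y) => px mx py my Hpx Hmx Hpy Hmy.
by rewrite !brDl !brDr (F1 Hpx Hpy) (F2 Hmx Hmy) => ->; abel.
Qed.
Lemma quad0 (w : L) : (w + w) + (w + w) = 0 -> w = 0.
Proof. by move=> H; apply: double0; apply: double0. Qed.

Lemma a_Sm a w : Aa a -> a *b Sm w = a *b w + a *b w.
Proof.
move=> Ha; have -> : Sm w = (w + w) - Sp w by rewrite /Sp /Sm; abel.
by rewrite brBr brDr (F1 Ha (ASp w)) subr0.
Qed.
Lemma b_Sp b w : Bb b -> b *b Sp w = b *b w + b *b w.
Proof.
move=> Hb; have -> : Sp w = (w + w) - Sm w by rewrite /Sp /Sm; abel.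
by rewrite brBr brDr (F2 Hb (BSm w)) subr0.
Qed.

Definition DD x y := sg (x *b y) - x *b sg y.
Lemma DD_AQ x : AQ (DD x).
Proof. exact: (Dlin x Hsg). Qed.
Lemma DD_AA a a' : Aa a -> Aa a' -> DD a a' = 0.
Proof. by move=> Ha Ha'; rewrite /DD Ha' (F1 Ha Ha') (lin0 Ls) subrr. Qed.
Lemma DD_BB b b' : Bb b -> Bb b' -> DD b b' = 0.
Proof. by move=> Hb Hb'; rewrite /DD Hb' brNr (F2 Hb Hb') (lin0 Ls) oppr0 subrr. Qed.
Lemma DD_AB a n : Aa a -> Bb n -> DD a n = Sp (a *b n).
Proof. by move=> Ha Hn; rewrite /DD Hn brNr /Sp; abel. Qed.
Lemma DD_BA b p : Bb b -> Aa p -> DD b p = - Sm (b *b p).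
Proof. by move=> Hb Hp; rewrite /DD Hp /Sm; abel. Qed.

Arguments DD_AA {a a'}. Arguments DD_BB {b b'}.
Arguments DD_AB {a n}. Arguments DD_BA {b p}.
Lemma KEY a b : Aa a -> Bb b -> exists c,
  (forall a', Aa a' -> - (Sp (a *b (b *b a')) + Sp (a *b (b *b a'))) = c *: a') /\
  (forall b', Bb b' -> - (Sm (b *b (a *b b')) + Sm (b *b (a *b b'))) = c *: b').
Proof.
move=> Ha Hb.
have [c Hc] := jordan_Q (DD_AQ a) (DD_AQ b).
exists c; split.
  move=> a' Ha'; rewrite -Hc (DD_AA Ha Ha') (lin0 (AQ_lin (DD_AQ b))) addr0.
  rewrite (DD_BA Hb Ha') (linN (AQ_lin (DD_AQ a))) (DD_AB Ha (BSm _)).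
  by rewrite (a_Sm _ _ Ha) (linD Sp_lin).
move=> b' Hb'; rewrite -Hc (DD_BB Hb Hb') (lin0 (AQ_lin (DD_AQ a))) add0r.
rewrite (DD_AB Ha Hb') (DD_BA Hb (ASp _)) (b_Sp _ _ Hb) (linD Sm_lin).
done.
Qed.
Lemma symA a a'' b : Aa a -> Aa a'' -> a *b (b *b a'') = a'' *b (b *b a).
Proof.
move=> Ha Ha''; rewrite jac (F1 Ha Ha'') br0r addr0.
by rewrite (brC a'' (a *b b)) (brC b a) brNr opprK.
Qed.
Lemma symB b b'' a : Bb b -> Bb b'' -> b *b (a *b b'') = b'' *b (a *b b).
Proof.
move=> Hb Hb''; rewrite jac (F2 Hb Hb'') br0r addr0.
by rewrite (brC b'' (b *b a)) (brC a b) brNr opprK.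
Qed.

Arguments KEY {a b}. Arguments symA {a a''} b. Arguments symB {b b''} a.
Lemma neg2 (w : L) : - (w + w) = 0 -> w = 0.
Proof. by move=> /eqP; rewrite oppr_eq0 => /eqP; apply: double0. Qed.

Lemma scale_eq (c c2 : F) (u v : L) : c != 0 -> c *: u = c2 *: v ->
  u = (c2 / c) *: v.
Proof.
move=> Hc E; apply: (@scalerI _ _ c) => //.
by rewrite E scalerA mulrC -mulrA mulVf // mulr1.
Qed.

Lemma Zero a b : Aa a -> Bb b ->
  (forall a', Aa a' -> Sp (a *b (b *b a')) = 0) /\
  (forall b', Bb b' -> Sm (b *b (a *b b')) = 0).
Proof.
move=> Ha Hb.
have [c [Hc1 Hc2]] := KEY Ha Hb.
case: (eqVneq c 0) => [c0|cn0].
  split=> [a' Ha'|b' Hb']; apply: neg2.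
    by rewrite Hc1 // c0 scale0r.
  by rewrite Hc2 // c0 scale0r.
exfalso.
have spanA : forall a'', Aa a'' -> exists t, a'' = t *: a.
  move=> a'' Ha''; have [c2 [Hc2' _]] := KEY Ha'' Hb.
  exists (c2 / c); apply: scale_eq cn0 _.
  by rewrite -Hc1 // (symA b Ha Ha'') Hc2'.
have spanB : forall b'', Bb b'' -> exists t, b'' = t *: b.
  move=> b'' Hb''; have [c3 [_ Hc3']] := KEY Ha Hb''.
  exists (c3 / c); apply: scale_eq cn0 _.
  by rewrite -Hc2 // (symB a Hb Hb'') Hc3'.
have span2 : forall v, exists t1 t2, v = t1 *: a + t2 *: b.
  move=> v; have [t1 E1] := spanA _ (ASp v); have [t2 E2] := spanB _ (BSm v).
  exists (t1 / 2%:R), (t2 / 2%:R).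
  have Ev : v = (2%:R : F)^-1 *: (Sp v + Sm v).
    rewrite /Sp /Sm -[v + sg v + (v - sg v)]/(v + sg v + (v - sg v)).
    have -> : v + sg v + (v - sg v) = (2%:R : F) *: v.
      by rewrite scaler_nat mulr2n; abel.
    by rewrite scalerA mulVf ?two_neq0 // scale1r.
  by rewrite {1}Ev E1 E2 scalerDr !scalerA ![_^-1 * _]mulrC.
have line : forall v, exists t, v = t *: (a *b b).
  apply: bracket_ind.
  - by exists 0; rewrite scale0r.
  - move=> a0 u v [t1 ->] [t2 ->]; exists (a0 * t1 + t2).
    by rewrite scalerDl scalerA.
  move=> x y.
  have [t1 [t2 ->]] := span2 x; have [t3 [t4 ->]] := span2 y.
  exists (t1 * t4 - t2 * t3).
  rewrite !brDl !brDr !brZl !brZr !brxx !scaler0 add0r addr0.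
  by rewrite (brC a b) !scalerN !scalerA scalerBl.
have [x [y]] := nonab.
have [t1 ->] := line x; have [t2 ->] := line y.
by rewrite brZl brZr brxx !scaler0 eqxx.
Qed.
Arguments Zero {a b}.
Lemma SpZ a' : Aa a' -> forall z, Sp (z *b a') = 0.
Proof.
move=> Ha'; apply: bracket_ind.
- by rewrite br0l (lin0 Sp_lin).
- by move=> al u v Hu Hv; rewrite brDZl Sp_lin Hu Hv scaler0 addr0.
move=> x y; apply: quad0.
have -> : Sp ((x *b y) *b a') + Sp ((x *b y) *b a') +
    (Sp ((x *b y) *b a') + Sp ((x *b y) *b a')) =
    Sp (((x *b y + x *b y) + (x *b y + x *b y)) *b a').
  by rewrite !brDl !(linD Sp_lin).
rewrite quad (brDl (Sp x *b Sm y) (Sm x *b Sp y) a') (linD Sp_lin).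
rewrite (brC a' (Sp x *b Sm y)) (brC a' (Sm x *b Sp y)).
rewrite (brC (Sm y) (Sp x)) brNr opprK !(linN Sp_lin).
rewrite ((Zero Ha' (BSm y)).1 _ (ASp x)) ((Zero Ha' (BSm x)).1 _ (ASp y)).
by rewrite oppr0 addr0.
Qed.

Lemma SmZ b' : Bb b' -> forall z, Sm (z *b b') = 0.
Proof.
move=> Hb'; apply: bracket_ind.
- by rewrite br0l (lin0 Sm_lin).
- by move=> al u v Hu Hv; rewrite brDZl Sm_lin Hu Hv scaler0 addr0.
move=> x y; apply: quad0.
have -> : Sm ((x *b y) *b b') + Sm ((x *b y) *b b') +
    (Sm ((x *b y) *b b') + Sm ((x *b y) *b b')) =
    Sm (((x *b y + x *b y) + (x *b y + x *b y)) *b b').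
  by rewrite !brDl !(linD Sm_lin).
rewrite quad (brDl (Sp x *b Sm y) (Sm x *b Sp y) b') (linD Sm_lin).
rewrite (brC b' (Sp x *b Sm y)) (brC b' (Sm x *b Sp y)).
rewrite (brC (Sp y) (Sm x)) brNr opprK !(linN Sm_lin).
rewrite ((Zero (ASp x) Hb').2 _ (BSm y)) ((Zero (ASp y) Hb').2 _ (BSm x)).
by rewrite oppr0 addr0.
Qed.

Arguments SpZ {a'}. Arguments SmZ {b'}.
Lemma caseA_false : False.
Proof.
have ab0 : forall a b, Aa a -> Bb b -> a *b b = 0.
  move=> a b Ha Hb; apply: double0.
  have -> : a *b b + a *b b = Sp (a *b b) + Sm (a *b b) by rewrite /Sp /Sm; abel.
  rewrite (SmZ Hb a) addr0 (brC b a) (linN Sp_lin) (SpZ Ha b).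
  by rewrite oppr0.
have [x [y]] := nonab.
suff -> : x *b y = 0 by rewrite eqxx.
apply: quad0; rewrite quad (ab0 _ _ (ASp x) (BSm y)) add0r.
by rewrite (brC (Sp y) (Sm x)) (ab0 _ _ (ASp y) (BSm x)) oppr0.
Qed.
End CaseA.

Lemma AQ0 s : AQ s -> forall v, s v = 0.
Proof.
move=> Hs0.
case: (classic (forall t, AQ t -> forall v, t (t v) = 0)) => [HB|Hn].
  exact: AQ0_B.
exfalso.
have [t0 Ht0'] := not_all_ex_not _ _ Hn.
have [Ht0 Ht0''] := imply_to_and _ _ Ht0'.
have [v0 Hv0] := not_all_ex_not _ _ Ht0''.
have [c Hc] := sq_Q _ Ht0.
have c0 : c != 0.
  by apply/eqP => c0; apply: Hv0; rewrite Hc c0 scale0r.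
pose r := sqrtC c.
have r2 : r * r = c by rewrite -expr2 sqrtCK.
have r0 : r != 0 by apply/eqP => r0; move: c0; rewrite -r2 r0 mul0r eqxx.
pose sg v := r^-1 *: t0 v.
have Hsg : AQ sg.
  case: Ht0 => L0 A0; split.
    by move=> a u v; rewrite /sg L0 scalerDr !scalerA mulrC.
  by move=> x y; rewrite /sg brZl brZr A0 scalerN.
have Hinv : forall v, sg (sg v) = v.
  move=> v; rewrite /sg (linZ (AQ_lin Ht0)) Hc !scalerA -r2.
  by rewrite mulrA mulrACA mulVf // mulr1 scale1r.
exact: (@caseA_false sg Hsg Hinv).
Qed.
Lemma main_pair (phi psi : L -> L) : lin phi -> lin psi ->
  (forall x y, phi x *b y = x *b psi y) ->
  exists lam, forall x, phi x = lam *: x /\ psi x = lam *: x.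
Proof.
move=> Lp Lq H.
have H' : forall x y, psi x *b y = x *b phi y.
  by move=> x y; rewrite brC -H brC opprK.
have L1 : lin (fun v => phi v + psi v).
  by move=> a u v /=; rewrite Lp Lq scalerDr; abel.
have Q1 : forall x y, (phi x + psi x) *b y = x *b (phi y + psi y).
  by move=> x y; rewrite brDl brDr H H' addrC.
have [c Hc] := @QS (fun v => phi v + psi v) L1 Q1.
have A1 : AQ (fun v => phi v - psi v).
  split; first by move=> a u v /=; rewrite Lp Lq scalerBr; abel.
  by move=> x y /=; rewrite brBl brBr H H' opprB.
have Hr := @AQ0 _ A1.
exists (c / 2%:R) => x.
have E1 := Hc x; have E2 := Hr x; simpl in E1, E2.
have Ep : phi x = psi x by apply/eqP; rewrite -subr_eq0 E2.
have Hq : psi x = (c / 2%:R) *: x.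
  apply: (@scalerI _ _ (2%:R : F)); first exact: two_neq0.
  rewrite scalerA mulrC divfK ?two_neq0 // -E1 Ep scaler_nat mulr2n.
  done.
by rewrite Ep Hq.
Qed.
End Lie.

Theorem lemma2p3 (R : realType) (L : vectType R[i]) (br : L -> L -> L)
  (eta : {vspace L}) (f : L -> L -> L) (phi psi : 'End(L)) :
  lie_bracket br -> lie_simple br -> cartan_subalgebra br eta ->
  biderivation br f ->
  (forall x y, f x y = br (phi x) y) ->
  (forall x y, f x y = br x (psi y)) ->
  exists lambda : R[i], forall (alpha : L -> R[i]), is_root br eta alpha ->
    forall x, weight_space br eta alpha x ->
      phi x = lambda *: x /\ psi x = lambda *: x.
Proof.
move=> HL Hs _ _ Hf1 Hf2.
have [lam Hlam] := @main_pair _ L br HL Hs phi psi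
  (fun a u v => linearP phi a u v) (fun a u v => linearP psi a u v)
  (fun x y => etrans (esym (Hf1 x y)) (Hf2 x y)).
by exists lam => alpha _ x _; apply: Hlam.
Qed.
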